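(* Let $q_1,q_2$ be coprime positive integers, $Q=q_1q_2$, let $V:\mathbb{Z}^2\to\mathbb{R}$ be $(q_1,q_2)$-periodic, and let $\lambda_*\in\mathbb{C}$. Then the Newton polytope of the Laurent polynomial $z\mapsto\mathcal{P}(z,\lambda_* )$ is the quadrilateral in $\mathbb{R}^2$ with vertices $(q_2,0)$, $(0,q_1)$, $(-q_2,0)$, $(0,-q_1)$ (coordinates being the exponents of $z_1$ and $z_2$ respectively).
   Context: $V$ is $(q_1,q_2)$-periodic if $V(n_1,n_2)=V(n_1+q_1,n_2)=V(n_1,n_2+q_2)$ for all $(n_1,n_2)\in\mathbb{Z}^2$. The operator $\Delta+V$ acts on $u:\mathbb{Z}^2\to\mathbb{C}$ by $((\Delta+V)u)(n)=u(n_1+1,n_2)+u(n_1-1,n_2)+u(n_1,n_2+1)+u(n_1,n_2-1)+V(n)u(n)$. For $z=(z_1,z_2)\in(\mathbb{C}\setminus\{0\})^2$, $\mathcal{D}_V(z)$ is the $Q\times Q$ matrix of $\Delta+V$ acting on the space of functions $u$ with $u(n_1+q_1,n_2)=z_1u(n)$ and $u(n_1,n_2+q_2)=z_2u(n)$ for all $n$, in the coordinates $\{u(n_1,n_2):1\le n_1\le q_1,1\le n_2\le q_2\}$, and $\mathcal{P}(z,\lambda)=\det(\mathcal{D}_V(z)-\lambda I)$, a Laurent polynomial in $z$. For a Laurent polynomial $f(z)=\sum_i c_iz^{e_i}$ with $c_i\neq0$, its support is $\{e_i\}\subset\mathbb{Z}^2$ and its Newton polytope is the convex hull of its support. *)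

(* Defs.v *)
From HB Require Import structures.
From mathcomp Require Import all_boot all_order all_algebra.
From mathcomp Require Import reals.
From mathcomp.real_closed Require Import complex.
Set Implicit Arguments. Unset Strict Implicit. Unset Printing Implicit Defensive.
Import Order.TTheory GRing.Theory Num.Theory.
Local Open Scope ring_scope.

(* The fundamental cell
   {(n1,n2) : 1 <= n1 <= q1, 1 <= n2 <= q2} is encoded by the finite type
   cell q1 q2 := 'I_q1 * 'I_q2, the pair (a1, a2) standing for
   (n1, n2) = (a1 + 1, a2 + 1). *)

Definition cell (q1 q2 : nat) := ('I_q1 * 'I_q2)%type.

Definition periodic (R : Type) (q1 q2 : nat) (V : int * int -> R) : Prop :=
  forall n1 n2 : int,
    V (n1, n2) = V (n1 + q1%:Z, n2) /\ V (n1, n2) = V (n1, n2 + q2%:Z).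

Definition dirs : seq (int * int) := [:: (1, 0); (-1, 0); (0, 1); (0, -1)].

(* The matrix D_V(z) of Delta + V on the (z1,z2)-quasi-periodic functions
   (u(n1+q1,n2) = z1 u(n), u(n1,n2+q2) = z2 u(n)), in the coordinates
   u(a), a in the fundamental cell (ordered by enum of cell q1 q2).
   A neighbour a + d (0-based) is reduced as  a + d = k q + r  with
   0 <= r < q  (Euclidean division, componentwise), so that
   u(a + d) = z1^k1 z2^k2 u(r). *)
Definition Dmx (R : realType) (q1 q2 : nat) (V : int * int -> R) (z1 z2 : R[i])
  : 'M[R[i]]_#|{: cell q1 q2}| :=
  \matrix_(i < #|{: cell q1 q2}|, j < #|{: cell q1 q2}|)
    let a : cell q1 q2 := enum_val i in let b : cell q1 q2 := enum_val j in
    (if a == b then Complex (V ((a.1 : int) + 1, (a.2 : int) + 1)) 0 else 0)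
    + \sum_(d <- dirs)
        let m1 := (a.1 : int) + d.1 in let m2 := (a.2 : int) + d.2 in
        if ((b.1 : int) == (m1 %% q1%:Z)%Z) && ((b.2 : int) == (m2 %% q2%:Z)%Z)
        then z1 ^ (m1 %/ q1%:Z)%Z * z2 ^ (m2 %/ q2%:Z)%Z
        else 0.

Definition Pdet (R : realType) (q1 q2 : nat) (V : int * int -> R) (lam : R[i])
  (z1 z2 : R[i]) : R[i] :=
  \det (Dmx q1 q2 V z1 z2 - lam%:M).

Definition laurent_rep (R : realType) (f : R[i] -> R[i] -> R[i])
  (c : int * int -> R[i]) : Prop :=
  exists s : seq (int * int),
    [/\ uniq s, (forall e, c e != 0 -> e \in s) &
        forall z1 z2 : R[i], z1 != 0 -> z2 != 0 ->
          f z1 z2 = \sum_(e <- s) c e * z1 ^ e.1 * z2 ^ e.2].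

Definition ptR (R : realType) (e : int * int) : R * R := ((e.1)%:~R, (e.2)%:~R).

Definition conv_hull (R : realType) (A : int * int -> Prop) (p : R * R) : Prop :=
  exists (s : seq (int * int)) (w : int * int -> R),
    [/\ forall e, e \in s -> A e,
        forall e, e \in s -> 0 <= w e,
        \sum_(e <- s) w e = 1,
        p.1 = \sum_(e <- s) w e * (ptR R e).1 &
        p.2 = \sum_(e <- s) w e * (ptR R e).2].

Definition support (R : realType) (c : int * int -> R[i]) (e : int * int) : Prop :=
  c e != 0.

Definition newton_polytope (R : realType) (c : int * int -> R[i]) : R * R -> Prop :=
  conv_hull (R:=R) (support c).

(* Main.v *)
Require Import Defs.
From HB Require Import structures.
From mathcomp Require Import all_boot all_order all_algebra.
From mathcomp Require Import reals.
From mathcomp.real_closed Require Import complex.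
From mathcomp Require Import zify ring lra.
Import Order.TTheory GRing.Theory Num.Theory.
Local Open Scope ring_scope.

Lemma sum_pick (F : fieldType) (T : eqType) (s : seq T) (e0 : T) (G : T -> F) :
  uniq s -> e0 \in s -> \sum_(e <- s) (if e == e0 then G e else 0) = G e0.
Proof.
move=> us e0s; rewrite (bigD1_seq e0) //= eqxx big1 ?addr0 // => e /negbTE ->; done.
Qed.

Lemma laurent1_uniq (F : numFieldType) (T : eqType) (s : seq T) (g : T -> F)
  (phi : T -> int) : uniq s -> {in s &, injective phi} ->
  (forall x : F, x != 0 -> \sum_(e <- s) g e * x ^ phi e = 0) ->
  forall e, e \in s -> g e = 0.
Proof.
move=> us inj H e0 e0s.
pose N : nat := (\sum_(e <- s) `|phi e|)%N.
have HN : forall e, e \in s -> 0 <= phi e + N%:Z.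
  move=> e es; rewrite /N (bigD1_seq e) //= PoszD.
  have : - phi e <= `|phi e|%N%:Z by rewrite abszE -normrN; exact: ler_norm.
  lia.
pose p : {poly F} := \sum_(e <- s) g e *: 'X^(absz (phi e + N%:Z)).
have p0 : p = 0.
  apply/eqP; apply/negPn/negP => pn0.
  pose rs : seq F := [seq (i.+1)%:R | i <- iota 0 (size p)].
  suff [h1 h2] : all (root p) rs /\ uniq rs.
    by have := max_poly_roots pn0 h1 h2; rewrite size_map size_iota ltnn.
  split.
  - apply/allP => x /mapP [i _ ->]; rewrite /root.
    have xn0 : (i.+1)%:R != 0 :> F by rewrite pnatr_eq0.
    rewrite /p horner_sum.
    have -> : \sum_(e <- s) (g e *: 'X^(absz (phi e + N%:Z))).[i.+1%:R] =
              (\sum_(e <- s) g e * (i.+1)%:R ^ phi e) * (i.+1)%:R ^+ N.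
      rewrite big_distrl /=; apply: eq_big_seq => e es.
      rewrite hornerZ hornerXn -mulrA; congr (_ * _).
      transitivity (((i.+1)%:R : F) ^ (absz (phi e + N%:Z) : int)); first by [].
      have -> : (absz (phi e + N%:Z) : int) = phi e + N%:Z by rewrite gez0_abs // HN.
      by rewrite expfzDr.
    by rewrite H // mul0r.
  - rewrite map_inj_uniq ?iota_uniq // => a b /eqP; rewrite eqr_nat => /eqP [].
    done.
have : p`_(absz (phi e0 + N%:Z)) = g e0.
  rewrite /p coef_sum.
  rewrite (eq_big_seq (fun e => if e == e0 then g e else 0)); first by rewrite sum_pick.
  move=> e es; rewrite coefZ coefXn; set b := (_ == _).
  have -> : b = (e == e0).
    apply/eqP/eqP => [h|-> //]; apply: inj => //.
    have : (absz (phi e + N%:Z) : int) = absz (phi e0 + N%:Z) by rewrite h.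
    rewrite !gez0_abs ?HN //; lia.
  by case: (e == e0); rewrite ?mulr1 ?mulr0.
by rewrite p0 coef0.
Qed.

Lemma laurent2_uniq (F : numFieldType) (s : seq (int * int)) (g : int * int -> F) :
  uniq s ->
  (forall z1 z2 : F, z1 != 0 -> z2 != 0 -> \sum_(e <- s) g e * z1 ^ e.1 * z2 ^ e.2 = 0) ->
  forall e, e \in s -> g e = 0.
Proof.
move=> us H.
pose B : nat := (\sum_(e <- s) `|e.1|)%N.
have HB : forall e, e \in s -> - B%:Z <= e.1 <= B%:Z.
  move=> e es; rewrite /B (bigD1_seq e) //= PoszD.
  have : - e.1 <= `|e.1|%N%:Z by rewrite abszE -normrN; exact: ler_norm.
  have : e.1 <= `|e.1|%N%:Z by rewrite abszE; exact: ler_norm.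
  lia.
pose M : int := 2 * B%:Z + 1.
apply: (@laurent1_uniq F _ s g (fun e => e.1 + e.2 * M)) => //.
  move=> e e' es e's /= h.
  have := HB e es; have := HB e' e's => h1 h2.
  have k0 : e'.2 - e.2 = 0.
    have : e.1 - e'.1 = (e'.2 - e.2) * (2 * B%:Z + 1).
      move: h; rewrite /M => h; apply/eqP; rewrite -subr_eq0; apply/eqP; move: h => /eqP; rewrite -subr_eq0 => /eqP <-; ring.
    move=> hh; nia.
  move: e e' es e's h1 h2 h k0 => [a b] [c d] _ _ _ _ /= h k0.
  have bd : b = d by lia.
  subst; congr pair; lia.
move=> x xn0.
have xM : x ^ M != 0 by rewrite expfz_neq0.
rewrite -[RHS](H x (x ^ M)) //; apply: eq_bigr => e _.
by rewrite -mulrA exprz_exp -expfzDr // (mulrC M).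
Qed.
Definition vb (q1 q2 : nat) : seq (int * int) :=
  [:: (q2%:Z, 0%Z); (0%Z, q1%:Z); (- q2%:Z, 0%Z); (0%Z, - q1%:Z)].

Section Hull.
Variable R : realType.
Variables q1 q2 : nat.
Hypothesis q1p : (0 < q1)%N.
Hypothesis q2p : (0 < q2)%N.

Definition uw (e v : int * int) : R :=
  let a := e.1%:~R / q2%:R in let b := e.2%:~R / q1%:R in
  let r := 1 - `|a| - `|b| in
  (if 0 < v.1 then (`|a| + a + r) / 2 else 0) +
  (if v.1 < 0 then (`|a| - a + r) / 2 else 0) +
  (if 0 < v.2 then (`|b| + b) / 2 else 0) +
  (if v.2 < 0 then (`|b| - b) / 2 else 0).

Lemma sum_vb (f : int * int -> R) :
  \sum_(v <- vb q1 q2) f v = f (q2%:Z, 0%Z) + f (0%Z, q1%:Z) + f (- q2%:Z, 0%Z) + f (0%Z, - q1%:Z).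
Proof. by rewrite /vb !big_cons big_nil addr0 !addrA. Qed.

Lemma uw_props (e : int * int) :
  q1%:Z * `|e.1| + q2%:Z * `|e.2| <= (q1 * q2)%N%:Z ->
  [/\ forall v, v \in vb q1 q2 -> 0 <= uw e v,
      \sum_(v <- vb q1 q2) uw e v = 1,
      \sum_(v <- vb q1 q2) uw e v * (ptR R v).1 = (ptR R e).1 &
      \sum_(v <- vb q1 q2) uw e v * (ptR R v).2 = (ptR R e).2].
Proof.
move=> he.
have Q1 : 0 < q1%:R :> R by rewrite ltr0n.
have Q2 : 0 < q2%:R :> R by rewrite ltr0n.
have z1 : (0 < q1%:Z) by rewrite ltz_nat.
have z2 : (0 < q2%:Z) by rewrite ltz_nat.
have z1' : (q1%:Z < 0) = false by rewrite ltNge ltW.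
have z2' : (q2%:Z < 0) = false by rewrite ltNge ltW.
have n1 : (0 < - q1%:Z) = false by rewrite oppr_gt0 z1'.
have n2 : (0 < - q2%:Z) = false by rewrite oppr_gt0 z2'.
have n1' : (- q1%:Z < 0) by rewrite oppr_lt0.
have n2' : (- q2%:Z < 0) by rewrite oppr_lt0.
rewrite /uw /=.
set a := (e.1%:~R / q2%:R : R); set b := (e.2%:~R / q1%:R : R).
have ha : a * q2%:R = e.1%:~R by rewrite /a mulfVK // gt_eqF.
have hb : b * q1%:R = e.2%:~R by rewrite /b mulfVK // gt_eqF.
have hab : `|a| + `|b| <= 1.
  have h : q1%:R * `|e.1%:~R| + q2%:R * `|e.2%:~R| <= q1%:R * q2%:R :> R.
    move: he; rewrite -(ler_int R) intrD !intrM !intr_norm.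
    by change (((q1*q2)%N%:Z)%:~R) with ((q1*q2)%:R : R); rewrite natrM.
  have ea : `|e.1%:~R| = `|a| * q2%:R :> R by rewrite -ha normrM (gtr0_norm Q2).
  have eb : `|e.2%:~R| = `|b| * q1%:R :> R by rewrite -hb normrM (gtr0_norm Q1).
  rewrite ea eb in h.
  have hq : 0 < q1%:R * q2%:R :> R by rewrite mulr_gt0.
  rewrite -(ler_pM2r hq) mul1r.
  by rewrite (_ : (`|a| + `|b|) * (q1%:R * q2%:R) = q1%:R * (`|a| * q2%:R) + q2%:R * (`|b| * q1%:R)) //; ring.
have a1 := ler_norm a; have a2 : - a <= `|a| by rewrite -normrN ler_norm.
have b1 := ler_norm b; have b2 : - b <= `|b| by rewrite -normrN ler_norm.
split.
- move=> v; rewrite /vb !inE => /or4P [] /eqP -> ; rewrite /= ?z1 ?z2 ?z1' ?z2' ?n1 ?n2 ?n1' ?n2' ?ltxx; lra.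
- rewrite sum_vb /= ?z1 ?z2 ?z1' ?z2' ?n1 ?n2 ?n1' ?n2' ?ltxx; lra.
- rewrite sum_vb /ptR /= ?z1 ?z2 ?z1' ?z2' ?n1 ?n2 ?n1' ?n2' ?ltxx -ha ?mulrNz; lra.
- rewrite sum_vb /ptR /= ?z1 ?z2 ?z1' ?z2' ?n1 ?n2 ?n1' ?n2' ?ltxx -hb ?mulrNz; lra.
Qed.


Lemma hull_equiv (A : int * int -> Prop) (p : R * R) :
  (forall e, A e -> q1%:Z * `|e.1| + q2%:Z * `|e.2| <= (q1 * q2)%N%:Z) ->
  (forall e, e \in vb q1 q2 -> A e) ->
  conv_hull A p <-> conv_hull (fun e => e \in vb q1 q2) p.
Proof.
move=> hA hv; split; last first.
  by case=> s [w [sA w0 w1 p1 p2]]; exists s, w; split => // e es; apply/hv/sA.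
case=> s [w [sA w0 w1 p1 p2]].
have U := fun e es => uw_props e (hA e (sA e es)).
exists (vb q1 q2), (fun v => \sum_(e <- s) w e * uw e v); split => //.
- move=> v vv; rewrite big_seq_cond; apply: sumr_ge0 => e /andP [es _].
  by apply: mulr_ge0; [exact: w0 | case: (U e es) => h _ _ _; apply: h].
- rewrite exchange_big /= -w1 big_seq [RHS]big_seq; apply: eq_bigr => e es.
  by rewrite -mulr_sumr; case: (U e es) => _ -> _ _; rewrite mulr1.
- rewrite p1; under [RHS]eq_bigr do rewrite mulr_suml.
  rewrite [RHS]exchange_big /= big_seq [RHS]big_seq; apply: eq_bigr => e es.
  under [RHS]eq_bigr do rewrite -mulrA.
  by rewrite -mulr_sumr; case: (U e es) => _ _ -> _.
- rewrite p2; under [RHS]eq_bigr do rewrite mulr_suml.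
  rewrite [RHS]exchange_big /= big_seq [RHS]big_seq; apply: eq_bigr => e es.
  under [RHS]eq_bigr do rewrite -mulrA.
  by rewrite -mulr_sumr; case: (U e es) => _ _ _ ->.
Qed.

End Hull.
From mathcomp Require Import perm.
Section Det.
Variable R : realType.
Variables q1 q2 : nat.
Variable V : int * int -> R.
Variable lam : R[i].
Hypothesis q1p : (0 < q1)%N.
Hypothesis q2p : (0 < q2)%N.

Local Notation T := (cell q1 q2).
Local Notation n := #|{: cell q1 q2}|.

Definition dd (k : 'I_5) : int * int :=
  nth (0%Z, 0%Z) [:: (0%Z, 0%Z); (1%Z, 0%Z); (-1%Z, 0%Z); (0%Z, 1%Z); (0%Z, -1%Z)] k.

Definition E1 (i : 'I_n) (k : 'I_5) : int :=
  (((((enum_val i : T).1 : nat) : int) + (dd k).1) %/ q1%:Z)%Z.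
Definition E2 (i : 'I_n) (k : 'I_5) : int :=
  (((((enum_val i : T).2 : nat) : int) + (dd k).2) %/ q2%:Z)%Z.

Definition cf (i j : 'I_n) (k : 'I_5) : R[i] :=
  let a : T := enum_val i in let b : T := enum_val j in
  if k == ord0 then
    (if i == j then Complex (V ((a.1 : int) + 1, (a.2 : int) + 1)) 0 - lam else 0)
  else if ((b.1 : int) == (((a.1 : int) + (dd k).1) %% q1%:Z)%Z) &&
          ((b.2 : int) == (((a.2 : int) + (dd k).2) %% q2%:Z)%Z) then 1 else 0.

Lemma ifmul (c : bool) (x y : R[i]) : (if c then 1 else 0) * x * y = if c then x * y else 0.
Proof. by case: c; rewrite ?mul1r ?mul0r. Qed.

Lemma entry (z1 z2 : R[i]) (i j : 'I_n) :
  (Dmx q1 q2 V z1 z2 - lam%:M) i j = \sum_(k < 5) cf i j k * z1 ^ E1 i k * z2 ^ E2 i k.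
Proof.
rewrite !mxE /dirs !big_cons big_nil !big_ord_recl big_ord0 /=.
rewrite /cf /E1 /E2 /= !ifmul !addr0.
have h1 : (((enum_val i : T).1 : int) %/ q1%:Z)%Z = 0.
  by apply: divz_small; rewrite /= ?ltz_nat ?ltn_ord.
have h2 : (((enum_val i : T).2 : int) %/ q2%:Z)%Z = 0.
  by apply: divz_small; rewrite /= ?ltz_nat ?ltn_ord.
rewrite h1 h2 !expr0z !mulr1 (inj_eq enum_val_inj) ?addr0.
by case: (i == j); rewrite /= ?mulr1n ?mulr0n ?subr0 ?add0r // addrAC.
Qed.


Definition Cs (s : 'S_n) (f : {ffun 'I_n -> 'I_5}) : R[i] :=
  (-1) ^+ s * \prod_i cf i (s i) (f i).
Definition EE (f : {ffun 'I_n -> 'I_5}) : int * int :=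
  (\sum_i E1 i (f i), \sum_i E2 i (f i)).

Lemma prod_expz (x : R[i]) (I : finType) (F : I -> int) :
  x != 0 -> \prod_i x ^ F i = x ^ (\sum_i F i).
Proof.
move=> xn0; symmetry.
exact: (big_morph (fun a => x ^ a) (fun a b => expfzDr a b xn0) (expr0z x)).
Qed.

Lemma det_expand (z1 z2 : R[i]) : z1 != 0 -> z2 != 0 ->
  Pdet q1 q2 V lam z1 z2 =
  \sum_(s : 'S_n) \sum_(f : {ffun 'I_n -> 'I_5}) Cs s f * z1 ^ (EE f).1 * z2 ^ (EE f).2.
Proof.
move=> n1 n2; rewrite /Pdet /determinant; apply: eq_bigr => s _.
under eq_bigr do rewrite entry.
rewrite bigA_distr_bigA mulr_sumr; apply: eq_bigr => f _.
by rewrite /Cs !big_split /= !prod_expz // !mulrA.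
Qed.


Definition c0 (e : int * int) : R[i] :=
  \sum_(s : 'S_n) \sum_(f : {ffun 'I_n -> 'I_5}) (if EE f == e then Cs s f else 0).

Definition s0 : seq (int * int) := undup [seq EE f | f <- enum {: {ffun 'I_n -> 'I_5}}].

Lemma EE_s0 f : EE f \in s0.
Proof. by rewrite mem_undup; apply: map_f; rewrite mem_enum. Qed.

Lemma c0_s0 e : c0 e != 0 -> e \in s0.
Proof.
apply: contraR => es; rewrite /c0 big1 // => s _; rewrite big1 // => f _.
by case: eqP => // h; move: es; rewrite -h EE_s0.
Qed.

Lemma c0_rep : laurent_rep (Pdet q1 q2 V lam) c0.
Proof.
exists s0; split; first exact: undup_uniq.
  by move=> e; apply: c0_s0.
move=> z1 z2 n1 n2; rewrite det_expand //.
rewrite /c0; under [RHS]eq_bigr do rewrite !mulr_suml.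
rewrite [RHS]exchange_big /=; apply: eq_bigr => s _.
under [RHS]eq_bigr do rewrite !mulr_suml.
rewrite [RHS]exchange_big /=; apply: eq_bigr => f _.
rewrite (eq_bigr (fun e => if e == EE f then Cs s f * z1 ^ e.1 * z2 ^ e.2 else 0)).
  by rewrite sum_pick ?undup_uniq ?EE_s0.
by move=> e _; rewrite eq_sym; case: eqP; rewrite ?mul0r.
Qed.


Lemma cf_red i j k : cf i j k != 0 ->
  ((enum_val j : T).1 : int) = ((((enum_val i : T).1 : int) + (dd k).1) %% q1%:Z)%Z /\
  ((enum_val j : T).2 : int) = ((((enum_val i : T).2 : int) + (dd k).2) %% q2%:Z)%Z.
Proof.
rewrite /cf; case: (eqVneq k ord0) => [-> | kn0].
  case: (eqVneq i j) => [<- _ | _]; last by rewrite eqxx.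
  rewrite /= !addr0 !modz_small //= ?ltz_nat ?ltn_ord //.
by case: ifP => [/andP [/eqP -> /eqP ->] | ] //; rewrite eqxx.
Qed.

Lemma E_eq i j k : cf i j k != 0 ->
  E1 i k * q1%:Z = ((enum_val i : T).1 : int) + (dd k).1 - ((enum_val j : T).1 : int) /\
  E2 i k * q2%:Z = ((enum_val i : T).2 : int) + (dd k).2 - ((enum_val j : T).2 : int).
Proof.
move=> /cf_red [-> ->]; rewrite /E1 /E2; split.
  by rewrite [X in X - _](divz_eq _ q1%:Z) addrK.
by rewrite [X in X - _](divz_eq _ q2%:Z) addrK.
Qed.

Lemma flow s f : Cs s f != 0 ->
  (EE f).1 * q1%:Z = \sum_i (dd (f i)).1 /\ (EE f).2 * q2%:Z = \sum_i (dd (f i)).2.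
Proof.
rewrite /Cs mulf_eq0 negb_or => /andP [_ /prodf_neq0 H].
have hs1 : \sum_(i : 'I_n) (((enum_val (s i) : T).1 : nat) : int) = \sum_(i : 'I_n) (((enum_val i : T).1 : nat) : int).
  by rewrite [in RHS](reindex_perm s).
have hs2 : \sum_(i : 'I_n) (((enum_val (s i) : T).2 : nat) : int) = \sum_(i : 'I_n) (((enum_val i : T).2 : nat) : int).
  by rewrite [in RHS](reindex_perm s).
split; rewrite /= mulr_suml.
  rewrite (eq_bigr (fun i : 'I_n => (((enum_val i : T).1 : nat) : int) + (dd (f i)).1 - (((enum_val (s i) : T).1 : nat) : int))); last first.
    by move=> i _; exact: (E_eq _ _ _ (H i isT)).1.
  rewrite sumrB big_split /= hs1; ring.
rewrite (eq_bigr (fun i : 'I_n => (((enum_val i : T).2 : nat) : int) + (dd (f i)).2 - (((enum_val (s i) : T).2 : nat) : int))); last first.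
  by move=> i _; exact: (E_eq _ _ _ (H i isT)).2.
rewrite sumrB big_split /= hs2; ring.
Qed.


Lemma dd_norm k : `|(dd k).1| + `|(dd k).2| <= 1.
Proof. by case: k => [[|[|[|[|[|?]]]]] ?]. Qed.

Lemma card_n : n = (q1 * q2)%N.
Proof. by rewrite /cell card_prod !card_ord. Qed.

Lemma c0_witness e : c0 e != 0 -> exists s f, EE f = e /\ Cs s f != 0.
Proof.
move=> ce.
case: (boolP [exists s, exists f, (EE f == e) && (Cs s f != 0)]).
  by move=> /existsP [s /existsP [f /andP [/eqP h1 h2]]]; exists s, f.
move=> /existsPn H; move: ce; rewrite /c0 big1 ?eqxx // => s _; rewrite big1 // => f _.
move: (H s) => /existsPn /(_ f); rewrite negb_and negbK => /orP [/negbTE -> // | /eqP ->].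
by case: ifP.
Qed.

Lemma support_bound e : c0 e != 0 -> q1%:Z * `|e.1| + q2%:Z * `|e.2| <= (q1 * q2)%N%:Z.
Proof.
move=> /c0_witness [s [f [Ef Cn]]]; subst e.
have [h1 h2] := flow _ _ Cn.
have -> : q1%:Z * `|(EE f).1| = `|\sum_i (dd (f i)).1|.
  by rewrite -h1 normrM mulrC (@ger0_norm _ q1%:Z).
have -> : q2%:Z * `|(EE f).2| = `|\sum_i (dd (f i)).2|.
  by rewrite -h2 normrM mulrC (@ger0_norm _ q2%:Z).
apply: le_trans (lerD (ler_norm_sum _ _ _) (ler_norm_sum _ _ _)) _.
rewrite -big_split /=.
apply: le_trans (ler_sum _ (fun i _ => dd_norm (f i))) _.
by rewrite sumr_const card_ord card_n natz.
Qed.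


Lemma red_lt q (hq : (0 < q)%N) (x : int) : (absz (x %% q%:Z)%Z < q)%N.
Proof.
have qn0 : q%:Z != 0 by rewrite eqz_nat -lt0n.
rewrite -ltz_nat gez0_abs ?modz_ge0 // ltz_pmod // ltz_nat.
Qed.

Definition shift (k : 'I_5) (a : T) : T :=
  (Ordinal (@red_lt q1 q1p ((a.1 : int) + (dd k).1)), Ordinal (@red_lt q2 q2p ((a.2 : int) + (dd k).2))).

Lemma modinj q (x y : 'I_q) (d : int) :
  absz (((x : int) + d) %% q%:Z)%Z = absz (((y : int) + d) %% q%:Z)%Z -> x = y.
Proof.
have qp : (0 < q)%N by case: q x {y} => [[]|].
have qn0 : q%:Z != 0 by rewrite eqz_nat -lt0n.
move/(congr1 Posz); rewrite !gez0_abs ?modz_ge0 // => /eqP.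
rewrite eqz_modDr !modz_small ?ltz_nat ?ltn_ord //= => /eqP h.
by apply: val_inj; case: h.
Qed.

Definition g0 k (i : 'I_n) : 'I_n := enum_rank (shift k (enum_val i)).

Lemma g0_inj k : injective (g0 k).
Proof.
move=> i j /(congr1 enum_val); rewrite /g0 !enum_rankK => h; apply: enum_val_inj.
move: h; rewrite /shift; case: (enum_val i) => [a1 a2]; case: (enum_val j) => [b1 b2] /= [].
by move=> /modinj -> /modinj ->.
Qed.

Definition sig0 k : 'S_n := perm (@g0_inj k).

Lemma sig0E k i : enum_val (sig0 k i) = shift k (enum_val i).
Proof. by rewrite permE /g0 enum_rankK. Qed.

Lemma cf_sig0 k i : k != ord0 -> cf i (sig0 k i) k = 1.
Proof.
move=> kn0; rewrite /cf (negbTE kn0) sig0E /=.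
have q1n0 : q1%:Z != 0 by rewrite eqz_nat -lt0n.
have q2n0 : q2%:Z != 0 by rewrite eqz_nat -lt0n.
by rewrite !gez0_abs ?modz_ge0 // !eqxx.
Qed.

Lemma cf_sig0_uniq k s i : k != ord0 -> cf i (s i) k != 0 -> s i = sig0 k i.
Proof.
move=> kn0 /cf_red [h1 h2]; apply: enum_val_inj; rewrite sig0E /shift.
move: h1 h2; case: (enum_val (s i)) => [b1 b2] /= h1 h2.
by congr pair; apply: val_inj => /=; rewrite -?h1 -?h2.
Qed.

Definition dot (k k' : 'I_5) : int := (dd k).1 * (dd k').1 + (dd k).2 * (dd k').2.

Lemma dot_le k0 k : k0 != ord0 -> (dot k0 k <= 1) && ((dot k0 k == 1) ==> (k == k0)).
Proof. by case: k0 => [[|[|[|[|[|?]]]]] ?] //; case: k => [[|[|[|[|[|?]]]]] ?]. Qed.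

Definition vtx (k : 'I_5) : int * int := (q2%:Z * (dd k).1, q1%:Z * (dd k).2).
Definition f0 (k : 'I_5) : {ffun 'I_n -> 'I_5} := [ffun => k].

Lemma only k s f : k != ord0 -> EE f = vtx k -> Cs s f != 0 -> f = f0 k /\ s = sig0 k.
Proof.
move=> kn0 Ef Cn; have [h1 h2] := flow _ _ Cn; rewrite Ef /= in h1 h2.
have hk : (dd k).1 * (dd k).1 + (dd k).2 * (dd k).2 = 1.
  by case: k kn0 {Ef h1 h2} => [[|[|[|[|[|?]]]]] ?].
have hsum : \sum_i (1 - dot k (f i)) = 0.
  have cn : (n%:R : int) = q1%:Z * q2%:Z by rewrite card_n natz PoszM.
  rewrite sumrB sumr_const card_ord cn /dot big_split /= -!mulr_sumr -h1 -h2.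
  transitivity (q1%:Z * q2%:Z * (1 - ((dd k).1 * (dd k).1 + (dd k).2 * (dd k).2))); first ring.
  by rewrite hk subrr mulr0.
have hf : forall i, f i = k.
  have nn : forall j, predT j -> 0 <= 1 - dot k (f j).
    by move=> j _; rewrite subr_ge0; case/andP: (dot_le k (f j) kn0).
  move=> i; have := psumr_eq0P nn hsum (i := i) isT.
  have := dot_le k (f i) kn0; case/andP => _ /implyP H.
  by move=> /eqP; rewrite subr_eq0 eq_sym => /H /eqP.
split; first by apply/ffunP => i; rewrite ffunE hf.
apply/permP => i; apply: (@cf_sig0_uniq k s i kn0).
move: Cn; rewrite /Cs mulf_eq0 negb_or => /andP [_ /prodf_neq0 H].
by rewrite -(hf i); exact: H.
Qed.

Lemma vertex k : k != ord0 -> c0 (vtx k) != 0.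
Proof.
move=> kn0.
have C0 : Cs (sig0 k) (f0 k) = (-1) ^+ sig0 k.
  by rewrite /Cs big1 ?mulr1 // => i _; rewrite ffunE cf_sig0.
have Cn : Cs (sig0 k) (f0 k) != 0 by rewrite C0 signr_eq0.
have q1n0 : q1%:Z != 0 by rewrite eqz_nat -lt0n.
have q2n0 : q2%:Z != 0 by rewrite eqz_nat -lt0n.
have E0 : EE (f0 k) = vtx k.
  have [h1 h2] := flow _ _ Cn.
  move: h1 h2; rewrite /vtx; case: (EE (f0 k)) => x y /= h1 h2.
  rewrite (eq_bigr (fun _ => (dd k).1)) in h1; last by move=> i _; rewrite ffunE.
  rewrite (eq_bigr (fun _ => (dd k).2)) in h2; last by move=> i _; rewrite ffunE.
  rewrite sumr_const card_ord card_n -mulr_natr natz PoszM in h1.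
  rewrite sumr_const card_ord card_n -mulr_natr natz PoszM in h2.
  congr pair.
    by apply: (@mulIf _ q1%:Z) => //=; rewrite h1; ring.
  by apply: (@mulIf _ q2%:Z) => //=; rewrite h2; ring.
rewrite /c0 (bigD1 (sig0 k)) //= (bigD1 (f0 k)) //= E0 eqxx.
rewrite big1 ?addr0; last first.
  move=> f fne; case: eqP => // Ef; apply/eqP/negPn/negP => Cn'.
  by have [h _] := only _ _ _ kn0 Ef Cn'; rewrite h eqxx in fne.
rewrite big1 ?addr0 //.
move=> s sne; rewrite big1 // => f _; case: eqP => // Ef; apply/eqP/negPn/negP => Cn'.
by have [_ h] := only _ _ _ kn0 Ef Cn'; rewrite h eqxx in sne.
Qed.

End Det.

Lemma sum_sub (K : zmodType) (T : eqType) (s1 s2 : seq T) (F : T -> K) :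
  uniq s1 -> uniq s2 -> {subset s1 <= s2} ->
  (forall e, e \in s2 -> e \notin s1 -> F e = 0) ->
  \sum_(e <- s1) F e = \sum_(e <- s2) F e.
Proof.
move=> u1 u2 sub h.
rewrite [RHS](bigID (mem s1)) /= [X in _ = _ + X]big1_seq ?addr0; last first.
  by move=> e /andP [ne es]; apply: h.
symmetry; rewrite -big_filter; apply: perm_big; apply: uniq_perm => //; first exact: filter_uniq.
move=> e; rewrite mem_filter; apply/andP/idP => [[] // | es]; split => //; exact: sub.
Qed.

Theorem lemma4p4 (R : realType) (q1 q2 : nat) (V : int * int -> R) (lam : R[i]) :
  (0 < q1)%N -> (0 < q2)%N -> coprime q1 q2 -> periodic q1 q2 V ->
  (exists c, laurent_rep (Pdet q1 q2 V lam) c) /\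
  (forall c, laurent_rep (Pdet q1 q2 V lam) c ->
     forall p : R * R,
       newton_polytope c p <->
       conv_hull (R:=R) (fun e => e \in [:: (q2%:Z, 0%Z); (0%Z, q1%:Z);
                                       (- q2%:Z, 0%Z); (0%Z, - q1%:Z)]) p).
Proof.
move=> q1p q2p _ _.
split; first by exists (c0 R q1 q2 V lam); exact: c0_rep.
move=> c [s [us hs hf]] p.
case: (c0_rep R q1 q2 V lam) => t [ut ht hft].
have hc : forall e, c e = c0 R q1 q2 V lam e.
  pose S := undup (s ++ t).
  have sS : {subset s <= S} by move=> e es; rewrite mem_undup mem_cat es.
  have tS : {subset t <= S} by move=> e es; rewrite mem_undup mem_cat es orbT.
  have key : forall e, e \in S -> c e - c0 R q1 q2 V lam e = 0.
    apply: (@laurent2_uniq _ S (fun e => c e - c0 R q1 q2 V lam e)); first exact: undup_uniq.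
    move=> z1 z2 n1 n2.
    under eq_bigr do rewrite !mulrBl.
    rewrite sumrB -(@sum_sub _ _ s S) ?undup_uniq //; last first.
      move=> e _ es; have -> : c e = 0 by apply/eqP; apply: contraNT es; exact: hs.
      by rewrite !mul0r.
    rewrite -(@sum_sub _ _ t S) ?undup_uniq //; last first.
      move=> e _ es; have -> : c0 R q1 q2 V lam e = 0 by apply/eqP; apply: contraNT es; exact: ht.
      by rewrite !mul0r.
    by rewrite -hf // -hft // subrr.
  move=> e; case: (boolP (e \in S)) => eS.
    by apply/eqP; rewrite -subr_eq0 key.
  have -> : c e = 0 by apply/eqP; apply: contraNT eS => /hs; exact: sS.
  by apply/esym/eqP; apply: contraNT eS => /ht; exact: tS.
rewrite /newton_polytope.
apply: (@hull_equiv R q1 q2 q1p q2p).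
  by move=> e; rewrite /Defs.support hc; exact: support_bound.
move=> e; rewrite /vb !inE => /or4P [] /eqP ->; rewrite /Defs.support hc.
- have := @vertex R q1 q2 V lam q1p q2p (Ordinal (isT : (1 < 5)%N)) isT.
  by rewrite /vtx /= mulr1 mulr0.
- have := @vertex R q1 q2 V lam q1p q2p (Ordinal (isT : (3 < 5)%N)) isT.
  by rewrite /vtx /= mulr1 mulr0.
- have := @vertex R q1 q2 V lam q1p q2p (Ordinal (isT : (2 < 5)%N)) isT.
  by rewrite /vtx /= mulrN1 mulr0.
- have := @vertex R q1 q2 V lam q1p q2p (Ordinal (isT : (4 < 5)%N)) isT.
  by rewrite /vtx /= mulrN1 mulr0.
Qed.
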